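(* Let $R$ be a pre-Schreier domain and let $a,b,c,d\in R$. If $ab=cd$, $a$ and $c$ are relatively prime, and $b$ and $d$ are relatively prime, then $a\sim d$ and $b\sim c$.
   Context: A domain is a commutative ring with identity without zero divisors. A domain $R$ is pre-Schreier if every non-zero $a\in R$ is primal: whenever $a\mid bc$ with $b,c\in R$, there exist $a_1,a_2\in R$ with $a=a_1a_2$, $a_1\mid b$ and $a_2\mid c$. Elements $a,b$ are relatively prime if they have no common non-invertible divisor. $a\sim b$ means $a$ and $b$ are associated. *)

(* Defs.v *)
From HB Require Import structures.
From mathcomp Require Import all_boot all_order all_algebra.
Set Implicit Arguments. Unset Strict Implicit. Unset Printing Implicit Defensive.
Import GRing.Theory.
Local Open Scope ring_scope.

Definition rdvd (R : comPzRingType) (a b : R) : Prop := exists x : R, b = a * x.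

Definition assoc (R : comPzRingType) (a b : R) : Prop := rdvd a b /\ rdvd b a.

Definition rel_prime (R : comUnitRingType) (a b : R) : Prop :=
  forall x : R, rdvd x a -> rdvd x b -> x \is a GRing.unit.

Definition primal (R : comPzRingType) (a : R) : Prop :=
  forall b c : R, rdvd a (b * c) ->
    exists a1 a2 : R, a = a1 * a2 /\ rdvd a1 b /\ rdvd a2 c.

Definition pre_schreier (R : idomainType) : Prop :=
  forall a : R, a != 0 -> primal a.

(* Main.v *)
Require Import Defs.
From mathcomp Require Import all_boot all_order all_algebra.
Local Open Scope ring_scope.
Import GRing.Theory.

Lemma rel_primeC (R : comUnitRingType) (a b : R) : rel_prime a b -> rel_prime b a.
Proof. by move=> H x h1 h2; apply: H. Qed.

Lemma key (R : idomainType) (HR : pre_schreier R) (x y z : R) :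
  rdvd x (y * z) -> rel_prime x y -> rdvd x z.
Proof.
move=> hd hp.
have [x0|nx] := eqVneq x 0.
  subst x.
  case: hd => k hk; have : y * z == 0 by rewrite hk mul0r.
  rewrite mulf_eq0 => /orP [/eqP y0|/eqP ->].
  - have : y \is a GRing.unit.
      by apply: hp; [exists 0; rewrite y0 mulr0 | exists 1; rewrite mulr1].
    by rewrite y0 unitr0.
  - by exists 0; rewrite mulr0.
have [x1 [x2 [ex [h1 [m hm]]]]] := HR x nx y z hd.
have u1 : x1 \is a GRing.unit by apply: hp => //; exists x2.
exists (x1^-1 * m); rewrite hm ex mulrA (mulrC x1) -(mulrA x2) mulrA.
by rewrite -(mulrA x2) mulrV // mulr1.
Qed.

Theorem lemma2 (R : idomainType) (HR : pre_schreier R) (a b c d : R) :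
  a * b = c * d -> rel_prime a c -> rel_prime b d ->
  assoc a d /\ assoc b c.
Proof.
move=> e hac hbd.
split; split.
- apply: (@key R HR a c d _ hac); exists b; by rewrite e.
- apply: (@key R HR d b a _ (@rel_primeC R b d hbd)); exists c; by rewrite mulrC e mulrC.
- apply: (@key R HR b d c _ hbd); exists a; by rewrite mulrC -e mulrC.
- apply: (@key R HR c a b _ (@rel_primeC R a c hac)); exists d; by rewrite e.
Qed.
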